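(* In the setting described in the context, let $i\in\mathcal V$ satisfy $\sigma_i^2\ge\sigma_j^2$ for every $j\in\mathcal V$, and let $z_{-i}=(z_j)_{j\ne i}$ be such that $\mathcal S(z_{-i})=\{j\ne i: z_j=1\}\ne\emptyset$. Then the following are equivalent: (i) $1\in\mathcal B_i(z_{-i})$; (ii) $\mathcal B_i(z_{-i})=[0,1]$; (iii) for every $z_i\in[0,1)$, writing $z=(z_i,z_{-i})$, there is exactly one node $j\in\mathcal S(z_{-i})$ reachable from $i$ (i.e. to which there is a path from $i$) in the graph $\mathcal G_{W(z)}$, and for this node $\sigma_i^2=\sigma_j^2$.
   Context: Let $n\ge2$ and $\mathcal V=\{1,\dots,n\}$. For a nonnegative $n\times n$ matrix $M$, $\mathcal G_M$ is the directed graph on $\mathcal V$ with edge $(k,l)$ iff $M_{kl}>0$. Let $P$ be a row-stochastic, irreducible, aperiodic matrix ($\mathcal G_P$ strongly connected with gcd of cycle lengths $1$). For $z\in[0,1]^n$, $W(z)=(I-[z])P+[z]$ ($[z]$ the diagonal matrix with diagonal $z$) and $H(z)=\lim_{t\to\infty}W(z)^t$ (the limit exists and is row-stochastic). Let $\sigma_1^2,\dots,\sigma_n^2>0$. Agent $i$'s cost is $\upsilon_i(z)=\sum_jH_{ij}(z)^2\sigma_j^2$, written $\upsilon_i(z_i,z_{-i})$, and her best response set is $\mathcal B_i(z_{-i})=\arg\min_{z_i\in[0,1]}\upsilon_i(z_i,z_{-i})$. *)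

(* Defs.v *)
From HB Require Import structures.
From mathcomp Require Import all_boot all_order all_algebra.
From mathcomp Require Import all_classical all_reals topology normedtype sequences.
Set Implicit Arguments. Unset Strict Implicit. Unset Printing Implicit Defensive.
Import Order.TTheory GRing.Theory Num.Theory numFieldNormedType.Exports.
Local Open Scope ring_scope.

Section Defs.
Variable R : realType.
Variable n : nat.

Definition graph_of (M : 'M[R]_n) : rel 'I_n := fun k l => 0 < M k l.

Fixpoint walk (e : rel 'I_n) (k l : 'I_n) (m : nat) : bool :=
  match m with
  | 0 => k == l
  | m'.+1 => [exists j, e k j && walk e j l m']
  end.

Definition row_stochastic (P : 'M[R]_n) : Prop :=
  (forall k l, 0 <= P k l) /\ (forall k, \sum_l P k l = 1).

Definition irreducible (P : 'M[R]_n) : Prop :=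
  forall k l, connect (graph_of P) k l.

(* gcd of cycle lengths is 1: the only common divisor of all
   lengths of closed walks (cycles) is 1 *)
Definition aperiodic (P : 'M[R]_n) : Prop :=
  forall d : nat,
    (forall (m : nat) (k : 'I_n), (0 < m)%N -> walk (graph_of P) k k m -> (d %| m)%N) ->
    d = 1%N.

Definition diagz (z : 'I_n -> R) : 'M[R]_n := diag_mx (\row_j z j).

Definition Wm (P : 'M[R]_n) (z : 'I_n -> R) : 'M[R]_n :=
  (1%:M - diagz z) *m P + diagz z.

Definition mxpow (A : 'M[R]_n) (t : nat) : 'M[R]_n := iter t (fun B => B *m A) 1%:M.

Definition Hm (P : 'M[R]_n) (z : 'I_n -> R) : 'M[R]_n :=
  \matrix_(k, l) limn (fun t => mxpow (Wm P z) t k l).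

Definition upsilon (P : 'M[R]_n) (s2 : 'I_n -> R) (i : 'I_n) (z : 'I_n -> R) : R :=
  \sum_j (Hm P z i j) ^+ 2 * s2 j.

(* (x, z_{-i}) : replace coordinate i of z by x *)
Definition upd (z : 'I_n -> R) (i : 'I_n) (x : R) : 'I_n -> R :=
  fun j => if j == i then x else z j.

(* best response set B_i(z_{-i}) (depends only on z_{-i}) *)
Definition best_resp (P : 'M[R]_n) (s2 : 'I_n -> R) (i : 'I_n) (z : 'I_n -> R) : set R :=
  [set x | 0 <= x <= 1 /\
     forall y, 0 <= y <= 1 -> upsilon P s2 i (upd z i x) <= upsilon P s2 i (upd z i y)].

Definition Sset (z : 'I_n -> R) (i : 'I_n) (j : 'I_n) : Prop := j != i /\ z j = 1.

End Defs.

(* Main.v *)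
Require Import Defs.
From HB Require Import structures.
From mathcomp Require Import all_boot all_order all_algebra.
From mathcomp Require Import all_classical all_reals topology normedtype sequences.
Import Order.TTheory GRing.Theory Num.Theory numFieldNormedType.Exports.
Local Open Scope ring_scope.
Local Open Scope classical_set_scope.
Set Implicit Arguments. Unset Strict Implicit.
From mathcomp Require Import lra.
Section Gen.
Variable R : realType.
Variable n : nat.
Variable W : 'M[R]_n.
Hypothesis hW0 : forall k l, 0 <= W k l.
Hypothesis hW1 : forall k, \sum_l W k l = 1.
Variable A : pred 'I_n.
Hypothesis hA : forall a l, A a -> W a l = (a == l)%:R.

Local Notation Wp := (mxpow W).

Lemma mxpowS t : Wp t.+1 = Wp t *m W.
Proof. by []. Qed.

Lemma mxpow0 : Wp 0 = 1%:M.
Proof. by []. Qed.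

Lemma mxpowD s t : Wp (s + t) = Wp s *m Wp t.
Proof.
elim: t => [|t IH]; first by rewrite addn0 mxpow0 mulmx1.
by rewrite addnS !mxpowS IH mulmxA.
Qed.

Lemma mxpowSl t : Wp t.+1 = W *m Wp t.
Proof. by rewrite -add1n mxpowD mxpowS mxpow0 mul1mx. Qed.

Lemma pow_ge0 t k l : 0 <= Wp t k l.
Proof.
elim: t k l => [|t IH] k l.
  by rewrite mxpow0 mxE ler0n.
rewrite mxpowS mxE; apply: sumr_ge0 => q _; exact: mulr_ge0.
Qed.

Lemma pow_sum1 t k : \sum_l Wp t k l = 1.
Proof.
elim: t k => [|t IH] k.
  rewrite mxpow0 (bigD1 k) //= mxE eqxx big1 ?addr0 // => l /negPf kl.
  by rewrite mxE eq_sym kl.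
rewrite mxpowS.
under eq_bigr do rewrite mxE.
rewrite exchange_big /=.
under eq_bigr do rewrite -mulr_sumr hW1 mulr1.
exact: IH.
Qed.

Lemma pow_abs t a l : A a -> Wp t a l = (a == l)%:R.
Proof.
move=> Aa; elim: t l => [|t IH] l; first by rewrite mxpow0 mxE.
rewrite mxpowS mxE (bigD1 a) //= IH eqxx mul1r hA // big1 ?addr0 // => q /negPf.
by rewrite IH eq_sym => ->; rewrite mul0r.
Qed.

Lemma pow_col_mono t k a : A a -> Wp t k a <= Wp t.+1 k a.
Proof.
move=> Aa; rewrite mxpowS mxE (bigD1 a) //= hA // eqxx mulr1 lerDl.
apply: sumr_ge0 => q _; exact: mulr_ge0 (pow_ge0 _ _ _) (hW0 _ _).
Qed.

Lemma pow_col_nondecr k a : A a -> nondecreasing_seq (fun t => Wp t k a).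
Proof.
move=> Aa; apply/nondecreasing_seqP => t; exact: pow_col_mono.
Qed.

Lemma pow_pos_connect t k l : 0 < Wp t k l -> connect (graph_of W) k l.
Proof.
elim: t l => [|t IH] l.
  rewrite mxpow0 mxE; case: eqP => [-> _|]; first exact: connect0.
  by rewrite ltxx.
rewrite mxpowS mxE => hpos.
have [q hq] : exists q, 0 < Wp t k q * W q l.
  case: (pselect (exists q, 0 < Wp t k q * W q l)) => // hn; exfalso; move: hpos; rewrite ltNge => /negP; apply.
  apply: sumr_le0 => q _; rewrite leNgt; apply/negP => h; apply: hn; exists q; exact: h.
have h1 : 0 < Wp t k q.
  rewrite lt_def pow_ge0 andbT; apply/eqP => h0; by rewrite h0 mul0r ltxx in hq.
have h2 : 0 < W q l.
  rewrite lt_def hW0 andbT; apply/eqP => h0; by rewrite h0 mulr0 ltxx in hq.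
apply: connect_trans (IH _ h1) (connect1 _); exact: h2.
Qed.

Lemma connect_pow_pos k l : connect (graph_of W) k l -> exists t, 0 < Wp t k l.
Proof.
move=> /connectP [p hp ->]; elim: p k hp => [|q p IH] k /=.
  by move=> _; exists 0%N; rewrite mxpow0 mxE eqxx ltr01.
move=> /andP [hkq hp]; have [t ht] := IH _ hp.
exists t.+1; rewrite mxpowSl mxE (bigD1 q) //= ltr_pwDl //.
  exact: mulr_gt0.
apply: sumr_ge0 => r _; exact: mulr_ge0 (hW0 _ _) (pow_ge0 _ _ _).
Qed.

End Gen.
Section Decay.
Variable R : realType.
Variable n : nat.
Variable W : 'M[R]_n.
Hypothesis hW0 : forall k l, 0 <= W k l.
Hypothesis hW1 : forall k, \sum_l W k l = 1.
Variable A : pred 'I_n.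
Hypothesis hA : forall a l, A a -> W a l = (a == l)%:R.
Hypothesis hreach : forall k, exists t, 0 < \sum_(l | A l) mxpow W t k l.
Variable k0 : 'I_n.

Local Notation Wp := (mxpow W).
Definition uu t k := \sum_(l | ~~ A l) Wp t k l.
Definition pA t k := \sum_(l | A l) Wp t k l.

Lemma uu_eq t k : uu t k = 1 - pA t k.
Proof.
by rewrite -(pow_sum1 hW1 t k) (bigID A) /= addrC addrK.
Qed.

Lemma uu_ge0 t k : 0 <= uu t k.
Proof. apply: sumr_ge0 => l _; exact: pow_ge0. Qed.

Lemma pA_mono t k : pA t k <= pA t.+1 k.
Proof. apply: ler_sum => a Aa; exact: (pow_col_mono hW0 hA). Qed.

Lemma uu_noninc k : nonincreasing_seq (fun t => uu t k).
Proof.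
apply/nonincreasing_seqP => t; rewrite !uu_eq; apply: lerB => //; exact: pA_mono.
Qed.

Lemma pA_monoN k : nondecreasing_seq (fun t => pA t k).
Proof. apply/nondecreasing_seqP => t; exact: pA_mono. Qed.

Lemma uu_abs t q : A q -> uu t q = 0.
Proof.
move=> Aq; apply: big1 => l nAl; rewrite (pow_abs hA) //.
by case: eqP => // ql; rewrite -ql Aq in nAl.
Qed.

Lemma unif : exists N c, 0 <= c < 1 /\ forall k, uu N k <= c.
Proof.
have [f hf] := choice hreach.
pose N := (\max_k f k)%N.
have hN k : 0 < pA N k.
  apply: lt_le_trans (hf k) _; apply: pA_monoN; exact: leq_bigmax.
pose c := \big[Order.max/0]_k uu N k.
exists N, c; split; last by move=> k; exact: le_bigmax.
apply/andP; split.
  apply: le_trans (uu_ge0 N k0) _; exact: le_bigmax.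
apply: bigmax_lt => //= k _; rewrite uu_eq; rewrite ltrBlDr ltrDl; exact: hN.
Qed.

Lemma uu_cvg0 k : (fun t => uu t k) @ \oo --> (0:R).
Proof.
have [N [c [/andP [c0 c1] hc]]] := unif.
have hstep m q : uu (m * N) q <= c ^+ m.
  elim: m q => [|m IH] q.
    rewrite mul0n expr0 uu_eq lerBlDr lerDl; apply: sumr_ge0 => l _; exact: pow_ge0.
  rewrite mulSn /uu (mxpowD W N (m * N)).
  under eq_bigr do rewrite mxE.
  rewrite exchange_big /=.
  rewrite (eq_bigr (fun j => Wp N q j * uu (m * N) j)); last first.
    by move=> j _; rewrite /uu mulr_sumr.
  rewrite (bigID A) /= big1 ?add0r; last first.
    by move=> l Al; rewrite uu_abs // mulr0.
  apply: (@le_trans _ _ (\sum_(l | ~~ A l) Wp N q l * c ^+ m)).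
    apply: ler_sum => l _; apply: ler_wpM2l; first exact: pow_ge0.
    exact: IH.
  rewrite -mulr_suml -/(uu N q) exprS; apply: ler_wpM2r; first exact: exprn_ge0.
  exact: hc.
have cv : cvgn (fun t => uu t k).
  apply: nonincreasing_is_cvgn; first exact: uu_noninc.
  by exists 0 => _ [t _ <-]; exact: uu_ge0.
suff L0 : limn (fun t => uu t k) = 0 by rewrite -L0.
apply/eqP; rewrite eq_le; apply/andP; split; last first.
  apply: limr_ge => //; near=> t; exact: uu_ge0.
have ce : (fun m => c ^+ m) @ \oo --> (0:R).
  apply: cvg_expr; by rewrite ger0_norm.
rewrite -(cvg_lim _ ce) //; apply: limr_ge; first by apply/cvg_ex; exists 0.
near=> m; apply: le_trans (hstep m k).
exact: nonincreasing_cvgn_ge (uu_noninc k) cv _.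
Unshelve. all: by end_near.
Qed.

Lemma col_le1 t k l : Wp t k l <= 1.
Proof.
rewrite -(pow_sum1 hW1 t k) (bigD1 l) //= lerDl; apply: sumr_ge0 => q _.
exact: pow_ge0.
Qed.

Lemma col_abs_cvg k a : A a -> cvgn (fun t => Wp t k a).
Proof.
move=> Aa; apply: nondecreasing_is_cvgn; first exact: (pow_col_nondecr hW0 hA).
by exists 1 => _ [t _ <-]; exact: col_le1.
Qed.

Lemma le_uu t k l : ~~ A l -> Wp t k l <= uu t k.
Proof.
move=> nAl; rewrite /uu (bigD1 l nAl) /= lerDl.
apply: sumr_ge0 => q _; exact: pow_ge0.
Qed.

Lemma col_tr_cvg k l : ~~ A l -> (fun t => Wp t k l) @ \oo --> (0:R).
Proof.
move=> nAl; apply: (@squeeze_cvgr _ _ _ _ (fun=> 0) (fun t => uu t k)).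
- near=> t; rewrite /= (pow_ge0 hW0) /=; exact: le_uu.
- exact: cvg_cst.
- exact: uu_cvg0.
Unshelve. all: by end_near.
Qed.

Lemma col_cvg k l : (fun t => Wp t k l) @ \oo --> limn (fun t => Wp t k l).
Proof.
case: (boolP (A l)) => Al; first exact: col_abs_cvg.
have h := col_tr_cvg k Al; by rewrite (cvg_lim _ h).
Qed.

End Decay.
Section Spec.
Variable R : realType.
Variable n : nat.
Variable P : 'M[R]_n.
Hypothesis hP : row_stochastic P.
Variable zz : 'I_n -> R.
Hypothesis hzz : forall k, 0 <= zz k <= 1.

Lemma W_entry k l : Wm P zz k l = (1 - zz k) * P k l + (k == l)%:R * zz k.
Proof.
rewrite /Wm mulmxBl mul1mx /diagz mul_diag_mx !mxE.
case: eqP => _; rewrite ?mulr1n ?mulr0n ?mul1r ?mul0r ?addr0 mulrBl mul1r //.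
Qed.

Lemma Wm_ge0 k l : 0 <= Wm P zz k l.
Proof.
case: hP => hP0 _; have /andP [h0 h1] := hzz k.
rewrite W_entry; apply: addr_ge0; apply: mulr_ge0; rewrite ?subr_ge0 ?ler0n //.
Qed.

Lemma Wm_sum1 k : \sum_l Wm P zz k l = 1.
Proof.
case: hP => _ hP1.
under eq_bigr do rewrite W_entry.
rewrite big_split /= -mulr_sumr hP1 mulr1 (bigD1 k) //= eqxx mul1r.
rewrite big1 ?addr0 ?subrK // => l /negPf; rewrite eq_sym => ->; by rewrite mul0r.
Qed.

Lemma Wm_abs a l : zz a == 1 -> Wm P zz a l = (a == l)%:R.
Proof.
move/eqP=> h; rewrite W_entry h subrr mul0r add0r mulr1 //.
Qed.

Lemma Wm_pos k l : zz k != 1 -> 0 < P k l -> 0 < Wm P zz k l.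
Proof.
move=> hk hkl; have /andP [h0 h1] := hzz k.
rewrite W_entry; apply: ltr_pwDl.
  apply: mulr_gt0 => //; rewrite subr_gt0 lt_def h1 andbT eq_sym //.
apply: mulr_ge0; [by rewrite ler0n | exact: h0].
Qed.

Local Notation A := (fun k => zz k == 1).

Lemma Wm_reach (hPi : irreducible P) a0 : zz a0 == 1 ->
  forall k, exists t, 0 < \sum_(l | A l) mxpow (Wm P zz) t k l.
Proof.
move=> ha0 k.
have : connect (graph_of P) k a0 by exact: hPi.
move=> /connectP [p hp hlast].
have base q : A q -> 0 < \sum_(l | A l) mxpow (Wm P zz) 0 q l.
  move=> Aq; rewrite (bigD1 q) //= mxE eqxx ltr_pwDl ?ltr01 //.
  by apply: sumr_ge0 => l _; rewrite mxE ler0n.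
elim: p k hp hlast => [|q p IH] k /=.
  by move=> _ hl; exists 0%N; apply: base; rewrite -hl.
move=> /andP [hkq hp] hl.
case: (boolP (zz k == 1)) => hk; first by exists 0%N; exact: base.
have [t ht] := IH q hp hl.
exists t.+1.
rewrite (eq_bigr (fun l => \sum_r Wm P zz k r * mxpow (Wm P zz) t r l)); last first.
  by move=> l _; rewrite mxpowSl mxE.
rewrite exchange_big /= (bigD1 q) //= -mulr_sumr ltr_pwDl //.
  apply: mulr_gt0 => //; exact: Wm_pos.
apply: sumr_ge0 => r _; rewrite -mulr_sumr; apply: mulr_ge0; first exact: Wm_ge0.
apply: sumr_ge0 => l _; exact: (pow_ge0 Wm_ge0).
Qed.

End Spec.
Section Row.
Variable R : realType.
Variable n : nat.
Variable P : 'M[R]_n.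
Hypothesis hP : row_stochastic P.
Hypothesis hPi : irreducible P.
Variable z : 'I_n -> R.
Variable i : 'I_n.
Hypothesis hz : forall j, j != i -> 0 <= z j <= 1.
Hypothesis hS : exists j, Sset z i j.
Variable x : R.
Hypothesis hx : 0 <= x < 1.

Let zz := upd z i x.
Let W := Wm P zz.
Let A := fun k => zz k == 1.

Let hzz k : 0 <= zz k <= 1.
Proof.
rewrite /zz /upd; case: eqP => [_|/eqP hk]; last exact: hz.
by case/andP: hx => h0 h1; rewrite h0 ltW.
Qed.

Let hW0 k l : 0 <= W k l. Proof. exact: Wm_ge0. Qed.
Let hW1 k : \sum_l W k l = 1. Proof. exact: Wm_sum1. Qed.
Let hA a l : A a -> W a l = (a == l)%:R. Proof. exact: Wm_abs. Qed.
Let hreach : forall k, exists t, 0 < \sum_(l | A l) mxpow W t k l.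
Proof.
have [a [ai za]] := hS.
apply: (Wm_reach hP hzz hPi (a0 := a)).
by rewrite /zz /upd (negPf ai) za.
Qed.

Let hrow k : Hm P zz i k = limn (fun t => mxpow W t i k).
Proof. by rewrite /Hm mxE. Qed.

Let cv k : (fun t => mxpow W t i k) @ \oo --> Hm P zz i k.
Proof. rewrite hrow; exact: (col_cvg hW0 hW1 hA hreach i). Qed.

Lemma row_ge0 k : 0 <= Hm P zz i k.
Proof.
rewrite hrow; apply: limr_ge; first exact: (col_cvg hW0 hW1 hA hreach i).
near=> t; exact: pow_ge0.
Unshelve. all: by end_near.
Qed.

Lemma row_sum1 : \sum_k Hm P zz i k = 1.
Proof.
have h : (fun t => \sum_k mxpow W t i k) @ \oo --> \sum_k Hm P zz i k.
  apply: cvg_big => //; try exact: add_continuous; move=> k _; exact: cv.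
have e : (fun t => \sum_k mxpow W t i k) = (fun=> 1).
  by apply: funext => t; exact: pow_sum1.
rewrite e in h; rewrite -(cvg_lim _ h) //; exact: lim_cst.
Qed.

Lemma row_pos k : 0 < Hm P zz i k -> connect (graph_of W) i k /\ Sset z i k.
Proof.
move=> hk; split.
  case: (boolP (connect (graph_of W) i k)) => // hc; exfalso.
  have e : (fun t => mxpow W t i k) = (fun=> 0).
    apply: funext => t; apply/eqP; rewrite eq_le pow_ge0 // andbT leNgt.
    by apply/negP => /(pow_pos_connect hW0) h; rewrite h in hc.
  by move: hk; rewrite hrow e lim_cst // ltxx.
case: (boolP (A k)) => Ak.
  have ki : k != i.
    apply/negP => /eqP ki; move: Ak; rewrite /A /zz /upd ki eqxx => /eqP x1.
    by case/andP: hx; rewrite x1 ltxx.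
  by split => //; move: Ak; rewrite /A /zz /upd (negPf ki) => /eqP.
have h := col_tr_cvg hW0 hW1 hA hreach i i Ak.
by move: hk; rewrite hrow (cvg_lim _ h) // ltxx.
Qed.

Lemma row_conn k : Sset z i k -> connect (graph_of W) i k -> 0 < Hm P zz i k.
Proof.
move=> [ki zk] hc; have [t ht] := connect_pow_pos hW0 hc.
have Ak : A k by rewrite /A /zz /upd (negPf ki) zk.
apply: lt_le_trans ht _; rewrite hrow.
apply: nondecreasing_cvgn_le; first exact: (pow_col_nondecr hW0 hA).
exact: (col_abs_cvg hW0 hW1 hA Ak).
Qed.

End Row.
Lemma num1 (R : realType) (h s t : R) : 0 < h -> h <= 1 -> 0 < s -> s <= t ->
  h ^+ 2 * s = h * t -> h = 1 /\ s = t.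
Proof.
move=> h0 h1 s0 st e.
have e2 : h * s = t.
  apply: (mulfI (lt0r_neq0 h0)); by rewrite mulrA -expr2.
have e3 : s = t by nra.
split => //; nra.
Qed.

Lemma num2 (R : realType) (h s t : R) : 0 <= h -> h <= 1 -> 0 < s -> s <= t ->
  h ^+ 2 * s <= h * t.
Proof.
move=> h0 h1 s0 st; rewrite expr2 -mulrA; apply: ler_wpM2l => //.
apply: le_trans st; rewrite ler_piMl //; exact: ltW.
Qed.

Lemma ups1 (R : realType) (n : nat) (P : 'M[R]_n) (s2 : 'I_n -> R) (z : 'I_n -> R) i :
  upsilon P s2 i (upd z i 1) = s2 i.
Proof.
have hA : forall a l, (fun k => upd z i 1 k == 1) a -> Wm P (upd z i 1) a l = (a == l)%:R.
  by move=> a l; exact: Wm_abs.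
have Ai : (fun k => upd z i 1 k == 1) i by rewrite /upd eqxx.
have hk k : Hm P (upd z i 1) i k = (i == k)%:R.
  rewrite /Hm mxE.
  have -> : (fun t => mxpow (Wm P (upd z i 1)) t i k) = (fun=> (i == k)%:R).
    apply: funext => t; exact: pow_abs hA t i k Ai.
  exact: lim_cst.
rewrite /upsilon (bigD1 i) //= hk eqxx expr1n mul1r big1 ?addr0 // => k ki.
by rewrite hk eq_sym (negPf ki) expr0n /= mul0r.
Qed.

Theorem proposition5 (R : realType) (n : nat) (hn : (2 <= n)%N)
  (P : 'M[R]_n) (s2 : 'I_n -> R)
  (hPs : row_stochastic P) (hPi : irreducible P) (hPa : aperiodic P)
  (hs2 : forall j, 0 < s2 j)
  (i : 'I_n) (hmax : forall j, s2 j <= s2 i)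
  (z : 'I_n -> R) (hz : forall j, j != i -> 0 <= z j <= 1)
  (hS : exists j, Sset z i j) :
  [/\ (1 \in best_resp P s2 i z <-> best_resp P s2 i z = `[0, 1]),
      (best_resp P s2 i z = `[0, 1] <->
        (forall zi : R, 0 <= zi < 1 ->
          exists j, [/\ Sset z i j, connect (graph_of (Wm P (upd z i zi))) i j,
                        (forall j', Sset z i j' ->
                           connect (graph_of (Wm P (upd z i zi))) i j' -> j' = j)
                      & s2 i = s2 j]))
    & ((forall zi : R, 0 <= zi < 1 ->
          exists j, [/\ Sset z i j, connect (graph_of (Wm P (upd z i zi))) i j,
                        (forall j', Sset z i j' ->
                           connect (graph_of (Wm P (upd z i zi))) i j' -> j' = j)
                      & s2 i = s2 j]) <-> 1 \in best_resp P s2 i z)].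
Proof.
have hsum x (hx : 0 <= x < 1) := row_sum1 hPs hPi hz hS hx.
have hge x (hx : 0 <= x < 1) k := row_ge0 hPs hPi hz hS hx k.
have hle1 x (hx : 0 <= x < 1) k : Hm P (upd z i x) i k <= 1.
  rewrite -(hsum x hx) (bigD1 k) //= lerDl; apply: sumr_ge0 => q _; exact: hge.
have F2 x (hx : 0 <= x < 1) : upsilon P s2 i (upd z i x) <= s2 i.
  rewrite -[s2 i]mul1r -(hsum x hx) mulr_suml /upsilon; apply: ler_sum => k _.
  exact: num2 (hge x hx k) (hle1 x hx k) (hs2 k) (hmax k).
have one_pos x (hx : 0 <= x < 1) k : s2 i <= upsilon P s2 i (upd z i x) ->
    0 < Hm P (upd z i x) i k -> Hm P (upd z i x) i k = 1 /\ s2 k = s2 i.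
  move=> hU hk.
  have e0 : \sum_k (Hm P (upd z i x) i k * s2 i - Hm P (upd z i x) i k ^+ 2 * s2 k) = 0.
    rewrite sumrB -mulr_suml hsum // mul1r -/(upsilon P s2 i (upd z i x)).
    apply/eqP; rewrite subr_eq0 eq_le hU F2 //.
  have := psumr_eq0P _ e0 (i := k) isT.
  move=> /(_ _) e1.
  have e2 : Hm P (upd z i x) i k ^+ 2 * s2 k = Hm P (upd z i x) i k * s2 i.
    apply/eqP; rewrite eq_sym -subr_eq0; apply/eqP; apply: e1 => q _.
    rewrite subr_ge0; exact: num2 (hge x hx q) (hle1 x hx q) (hs2 q) (hmax q).
  have [h1 h2] := num1 hk (hle1 x hx k) (hs2 k) (hmax k) e2.
  by split.
have i1_iff : 1 \in best_resp P s2 i z <->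
    (forall w, 0 <= w <= 1 -> s2 i <= upsilon P s2 i (upd z i w)).
  rewrite in_setE /best_resp /=; split.
    by move=> [_ h] w hw; move: (h w hw); rewrite ups1.
  move=> h; split; first by rewrite ler01 lexx.
  by move=> w hw; rewrite ups1; exact: h.
have i1_i2 : (forall w, 0 <= w <= 1 -> s2 i <= upsilon P s2 i (upd z i w)) ->
    best_resp P s2 i z = `[0, 1].
  move=> h; apply/seteqP; split => y /=.
    by case; rewrite in_itv /=.
  rewrite in_itv /= => hy; split => // w hw.
  have [->|y1] := eqVneq y 1; first by rewrite ups1; exact: h.
  have hy' : 0 <= y < 1 by case/andP: hy => -> y1'; rewrite lt_neqAle y1 y1'.
  exact: le_trans (F2 y hy') (h w hw).
have i2_i1 : best_resp P s2 i z = `[0, 1] -> 1 \in best_resp P s2 i z.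
  by move=> e; rewrite e in_setE /= in_itv /= ler01 lexx.
have i1_i3 : (forall w, 0 <= w <= 1 -> s2 i <= upsilon P s2 i (upd z i w)) ->
    (forall zi : R, 0 <= zi < 1 ->
          exists j, [/\ Sset z i j, connect (graph_of (Wm P (upd z i zi))) i j,
                        (forall j', Sset z i j' ->
                           connect (graph_of (Wm P (upd z i zi))) i j' -> j' = j)
                      & s2 i = s2 j]).
  move=> h zi hzi.
  have hU : s2 i <= upsilon P s2 i (upd z i zi).
    by apply: h; case/andP: hzi => -> /ltW ->.
  have [j hj] : exists j, 0 < Hm P (upd z i zi) i j.
    case: (pselect (exists j, 0 < Hm P (upd z i zi) i j)) => // hn'; exfalso.
    have : \sum_k Hm P (upd z i zi) i k <= 0.
      apply: sumr_le0 => k _; rewrite leNgt; apply/negP => hk; apply: hn'; by exists k.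
    by rewrite hsum // ler10.
  have [hj1 sj] := one_pos _ hzi _ hU hj.
  have [cj Sj] := row_pos hPs hPi hz hS hzi hj.
  exists j; split; [exact: Sj | exact: cj | | by rewrite sj].
  move=> j' Sj' cj'.
  have hj' := row_conn hPs hz hzi Sj' cj'.
  have [hj'1 _] := one_pos _ hzi _ hU hj'.
  apply/eqP; apply/negP => /negP ne; exfalso.
  have := hsum _ hzi; rewrite (bigD1 j) //= (bigD1 j') //= hj1 hj'1.
  have : 0 <= \sum_(k | (k != j) && (k != j')) Hm P (upd z i zi) i k.
    apply: sumr_ge0 => q _; exact: hge.
  move: (\sum_(k | _) _) => S S0 eS.
  have : 1 < 1 + (1 + S) by rewrite ltrDl; exact: ltr_pwDl ltr01 S0.
  by rewrite eS ltxx.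
have i3_i1 : (forall zi : R, 0 <= zi < 1 ->
          exists j, [/\ Sset z i j, connect (graph_of (Wm P (upd z i zi))) i j,
                        (forall j', Sset z i j' ->
                           connect (graph_of (Wm P (upd z i zi))) i j' -> j' = j)
                      & s2 i = s2 j]) ->
    (forall w, 0 <= w <= 1 -> s2 i <= upsilon P s2 i (upd z i w)).
  move=> hq w hw.
  have [->|w1] := eqVneq w 1; first by rewrite ups1.
  have hw' : 0 <= w < 1 by case/andP: hw => -> w1'; rewrite lt_neqAle w1 w1'.
  have [j [Sj cj uj sj]] := hq w hw'.
  have h0 k : k != j -> Hm P (upd z i w) i k = 0.
    move=> kj; apply/eqP; rewrite eq_le hge // andbT leNgt; apply/negP => hk.
    have [ck Sk] := row_pos hPs hPi hz hS hw' hk.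
    by rewrite (uj k Sk ck) eqxx in kj.
  have hj1 : Hm P (upd z i w) i j = 1.
    rewrite -(hsum w hw') (bigD1 j) //= big1 ?addr0 // => k; exact: h0.
  rewrite /upsilon (bigD1 j) //= hj1 big1 ?addr0.
    by rewrite expr1n mul1r sj.
  by move=> k kj; rewrite h0 // expr0n mul0r.
split.
- split; [by move/i1_iff/i1_i2 | exact: i2_i1].
- split; [by move/i2_i1/i1_iff/i1_i3 | by move/i3_i1/i1_i2].
- split; [by move/i3_i1/i1_iff | by move/i1_iff/i1_i3].
Qed.
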